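(* Let $q\ge 2$ be a prime power and let $n\ge 6$ be divisible by $3$. Then every $3$-spread of $\mathbb{F}_q^n$ is a completely regular code in the Grassmann graph $J_q(n,3)$ with covering radius $2$.
   Context: The Grassmann graph $J_q(n,k)$ has as vertices the $k$-dimensional subspaces of $\mathbb{F}_q^n$, adjacent iff they meet in a $(k-1)$-dimensional subspace. A $3$-spread is a set of $3$-dimensional subspaces of $\mathbb{F}_q^n$ such that every nonzero vector lies in exactly one of them. For a nonempty vertex set $C$ of a connected regular graph, $C_i$ denotes the set of vertices at distance exactly $i$ from $C$, the covering radius $\rho$ is the largest $i$ with $C_i\ne\emptyset$, and $C$ is completely regular if there are numbers $\gamma_i,\alpha_i,\beta_i$ such that every vertex of $C_i$ has exactly $\gamma_i$ neighbours in $C_{i-1}$, $\alpha_i$ in $C_i$ and $\beta_i$ in $C_{i+1}$, for all $i$. *)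

(* Defs.v *)
From HB Require Import structures.
From mathcomp Require Import all_boot all_order all_algebra all_field.
Set Implicit Arguments. Unset Strict Implicit. Unset Printing Implicit Defensive.
Import GRing.Theory.
Local Open Scope ring_scope.

Fixpoint reach (V : Type) (adj : V -> V -> Prop) (k : nat) (x y : V) : Prop :=
  match k with
  | 0 => x = y
  | k'.+1 => reach adj k' x y \/ exists z, reach adj k' x z /\ adj z y
  end.

(* layer adj C i x : x lies at distance exactly i from the vertex set C, i.e. x \in C_i *)
Definition layer (V : Type) (adj : V -> V -> Prop) (C : V -> Prop) (i : nat) (x : V) : Prop :=
  (exists c, C c /\ reach adj i c x) /\
  (forall j c, (j < i)%N -> C c -> ~ reach adj j c x).

Definition num_exactly (V : eqType) (P : V -> Prop) (k : nat) : Prop :=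
  exists s : seq V, [/\ uniq s, size s = k & forall y, y \in s <-> P y].

Definition covering_radius (V : Type) (adj : V -> V -> Prop) (C : V -> Prop) (rho : nat) : Prop :=
  (exists x, layer adj C rho x) /\ (forall i x, (rho < i)%N -> ~ layer adj C i x).

(* C is completely regular: there are numbers gamma_i, alpha_i, beta_i such that every
   vertex of C_i has gamma_i neighbours in C_{i-1}, alpha_i in C_i, beta_i in C_{i+1}.
   (For i = 0, C_{-1} is empty, so the gamma condition is only imposed for i > 0.) *)
Definition completely_regular (V : eqType) (adj : V -> V -> Prop) (C : V -> Prop) : Prop :=
  exists gamma alpha beta : nat -> nat,
    forall i x, layer adj C i x ->
      [/\ (0 < i)%N -> num_exactly (fun y => adj x y /\ layer adj C i.-1 y) (gamma i),
          num_exactly (fun y => adj x y /\ layer adj C i y) (alpha i)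
        & num_exactly (fun y => adj x y /\ layer adj C i.+1 y) (beta i)].

Definition grass_vertex (F : finFieldType) (n k : nat) :=
  {U : {vspace 'rV[F]_n} | \dim U == k}.

Definition grass_adj (F : finFieldType) (n k : nat) (U W : grass_vertex F n k) : Prop :=
  \dim (sval U :&: sval W)%VS = k.-1.

Definition is_spread3 (F : finFieldType) (n : nat) (S : grass_vertex F n 3 -> Prop) : Prop :=
  forall v : 'rV[F]_n, v != 0 -> exists! U, S U /\ v \in sval U.

(* Main.v *)
Require Import Defs.
From HB Require Import structures.
From mathcomp Require Import all_boot all_order all_algebra all_field.
From mathcomp Require Import zify.
From Stdlib Require Import ClassicalEpsilon.
Set Implicit Arguments. Unset Strict Implicit. Unset Printing Implicit Defensive.
Import GRing.Theory.

Lemma card_fiber (T U : finType) (f : T -> U) (D : pred T) (A : pred U) :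
  (forall t, D t -> A (f t)) -> #|D| = \sum_(u | A u) #|[pred t | D t && (f t == u)]|.
Proof.
move=> H; rewrite -sum1_card (partition_big f A) //=.
by apply: eq_bigr => u _; rewrite -sum1_card.
Qed.

Lemma dcount (T U : finType) (f : T -> U) (D : pred T) (A : pred U) c :
  (forall t, D t -> A (f t)) ->
  (forall u, A u -> #|[pred t | D t && (f t == u)]| = c) -> #|D| = #|A| * c.
Proof.
move=> H1 H2; rewrite (card_fiber H1) -sum_nat_const.
by apply: eq_bigr => u /H2.
Qed.

Lemma pinj (X Y : Type) (a : X) : injective (@pair X Y a).
Proof. by move=> y1 y2 [].  Qed.

Lemma card_dpair (X Y : finType) (A : pred X) (B : X -> pred Y) c :
  (forall a, A a -> #|B a| = c) ->
  #|[pred t : X * Y | A t.1 && B t.1 t.2]| = #|A| * c.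
Proof.
move=> H; apply: (dcount (f := fst)) => [t /andP[]//|a Aa].
rewrite -(H a Aa) -(card_imset _ (@pinj _ _ a)) /=.
apply: eq_card => t; rewrite !inE; apply/idP/imsetP.
  case: t => a' y /= /andP[/andP[_ By] /eqP e]; subst a'; by exists y.
by case=> y By ->; rewrite /= eqxx Aa andbT.
Qed.

Section Vs.
Variables (F : finFieldType) (n : nat).
Local Notation V := 'rV[F]_n.
Local Notation q := #|F|.
Implicit Types (U W P Q X T M : {vspace V}) (v a b c : V).

Lemma card_diff U P :
  #|[pred v : V | (v \in U) && (v \notin P)]| = q ^ \dim U - q ^ \dim (U :&: P).
Proof.
have := cardID (mem P) (mem U).
rewrite -!card_vspace.
have -> : #|[predI mem U & mem P]| = #|(U :&: P)%VS|.
  by apply: eq_card => v; rewrite !inE memv_cap.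
move=> <-; rewrite addKn; apply: eq_card => v; rewrite !inE.
by rewrite andbC.
Qed.

Lemma dcapl U W : \dim (U :&: W) <= \dim U.
Proof. exact: dimvS (capvSl U W). Qed.
Lemma dcapr U W : \dim (U :&: W) <= \dim W.
Proof. exact: dimvS (capvSr U W). Qed.

Lemma sub_eqdim U W : (U <= W)%VS -> \dim W <= \dim U -> U = W.
Proof. by move=> h1 h2; apply/eqP; rewrite eqEdim h1 h2. Qed.

Lemma cap_line U v : v \notin U -> (U :&: <[v]> = 0)%VS.
Proof.
move=> vU; apply/eqP; rewrite -subv0; apply/subvP => w /memv_capP[wU /vlineP[k e]].
rewrite memv0; subst w; case: (eqVneq k 0%R) => [->|k0]; first by rewrite scale0r.
by move: (memvZ k^-1 wU); rewrite scalerA mulVf // scale1r (negbTE vU).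
Qed.

Lemma nz_notin U v : v \notin U -> v != 0%R.
Proof. by apply: contraNneq => ->; rewrite mem0v. Qed.

Lemma dim_addl U v : v \notin U -> \dim (U + <[v]>) = (\dim U).+1.
Proof.
move=> vU; have := dimv_sum_cap U <[v]>.
by rewrite cap_line // dimv0 addn0 dim_vline (nz_notin vU) addn1.
Qed.

Lemma meet P Q W : (P <= W)%VS -> (Q <= W)%VS -> \dim W < \dim P + \dim Q ->
  0 < \dim (P :&: Q).
Proof.
move=> PW QW; have := dimv_sum_cap P Q.
have : \dim (P + Q) <= \dim W by apply: dimvS; rewrite subv_add PW QW.
lia.
Qed.

Lemma dimpos_vec U : 0 < \dim U -> exists2 v, v \in U & v != 0%R.
Proof.
move=> h; exists (vpick U); first exact: memv_pick.
by rewrite vpick0 -dimv_eq0 -lt0n.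
Qed.

Lemma dim_line v : v != 0%R -> \dim <[v]> = 1.
Proof. by move=> h; rewrite dim_vline h. Qed.

Lemma card_nz U : #|[pred v : V | (v \in U) && (v \notin (0%VS : {vspace V}))]| = q ^ \dim U - 1.
Proof. by rewrite card_diff capv0 dimv0. Qed.

Lemma card_indep U :
  #|[pred t : V * V | ((t.1 \in U) && (t.1 \notin (0%VS : {vspace V}))) &&
       ((t.2 \in U) && (t.2 \notin <[t.1]>%VS))]| = (q ^ \dim U - 1) * (q ^ \dim U - q).
Proof.
rewrite (@card_dpair _ _ [pred v : V | (v \in U) && (v \notin (0%VS : {vspace V}))]
   (fun a => [pred v : V | (v \in U) && (v \notin <[a]>%VS)]) (q ^ \dim U - q)).
  by rewrite card_nz.
move=> a /andP[aU]; rewrite memv0 => a0.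
rewrite card_diff; congr (_ - _).
have -> : (U :&: <[a]> = <[a]>)%VS by apply/capv_idPr; rewrite -memvE.
by rewrite dim_line // expn1.
Qed.

End Vs.

Section VsT.
Variables (F : finFieldType) (n : nat).
Definition vsT := {vspace 'rV[F]_n}.
HB.instance Definition _ := Countable.copy vsT (can_type (@VectorInternalTheory.vs2mxK F 'rV[F]_n)).
HB.instance Definition _ := Finite.copy vsT (can_type (@VectorInternalTheory.vs2mxK F 'rV[F]_n)).
End VsT.

Section Span.
Variables (F : finFieldType) (n : nat).
Local Notation V := 'rV[F]_n.
Local Notation q := #|F|.
Implicit Types (U W P Q X T M Y Z : {vspace V}) (v a b c : V).

Definition span3 a b c : {vspace V} := (<[a]> + <[b]> + <[c]>)%VS.

Lemma span3_sub a b c W : (span3 a b c <= W)%VS = [&& a \in W, b \in W & c \in W].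
Proof. by rewrite /span3 !subv_add -!memvE andbA. Qed.

Lemma mem_span3 a b c : [/\ a \in span3 a b c, b \in span3 a b c & c \in span3 a b c].
Proof. by have := subvv (span3 a b c); rewrite {1}span3_sub => /and3P[]. Qed.

Lemma dim_span3 a b c : a != 0%R -> b \notin <[a]>%VS -> c \notin (<[a]> + <[b]>)%VS ->
  \dim (span3 a b c) = 3.
Proof. by move=> a0 ba cab; rewrite /span3 dim_addl // dim_addl // dim_line. Qed.

Lemma span3_eq a b c W : \dim (span3 a b c) = 3 -> \dim W = 3 ->
  a \in W -> b \in W -> c \in W -> span3 a b c = W.
Proof.
move=> d1 d2 aW bW cW; apply: sub_eqdim; first by rewrite span3_sub aW bW cW.
by rewrite d1 d2.
Qed.

Lemma cap_two Y X Z c : \dim Y = 3 -> (Z <= Y :&: X)%VS -> \dim Z = 2 ->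
  c \in Y -> c \notin X -> \dim (Y :&: X) = 2.
Proof.
move=> dY ZYX dZ cY cX; have h1 := dimvS ZYX; have h2 := dcapl Y X.
case: (ltngtP (\dim (Y :&: X)%VS) 3) => [|h|h]; first by lia.
  by move: h2; rewrite dY; lia.
have e : (Y :&: X)%VS = Y by apply: sub_eqdim; [exact: capvSl | rewrite h dY].
by move: cX; rewrite -e in cY; move/memv_capP: cY => [_ ->].
Qed.

Lemma line_sub2 a b : a != 0%R -> b \notin <[a]>%VS -> \dim (<[a]> + <[b]>)%VS = 2.
Proof. by move=> a0 ba; rewrite dim_addl // dim_line. Qed.

End Span.

Section CountK.
Variables (F : finFieldType) (n : nat).
Local Notation V := 'rV[F]_n.
Local Notation q := #|F|.
Local Notation VS := (vsT F n).
Implicit Types (U W P Q X T M Y Z : {vspace V}) (v a b c : V).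

Definition indep (U : {vspace V}) := [pred t : V * V | ((t.1 \in U) && (t.1 \notin (0%VS : {vspace V}))) &&
       ((t.2 \in U) && (t.2 \notin <[t.1]>%VS))].

Lemma card_indep' U : #|indep U| = (q ^ \dim U - 1) * (q ^ \dim U - q).
Proof. exact: card_indep. Qed.

Definition vdiff (U P : {vspace V}) := [pred v : V | (v \in U) && (v \notin P)].

Lemma card_vdiff U P : #|vdiff U P| = q ^ \dim U - q ^ \dim (U :&: P).
Proof. exact: card_diff. Qed.

Definition tri (A : pred (V * V)) (C : pred V) := [pred t : (V * V) * V | A t.1 && C t.2].

Lemma card_tri A C : #|tri A C| = #|A| * #|C|.
Proof. exact: (@card_dpair _ _ A (fun _ => C)). Qed.

Definition sp (t : (V * V) * V) : VS := span3 t.1.1 t.1.2 t.2.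

Lemma imgK X a b c : (a, b) \in indep X -> c \in vdiff fullv X ->
  \dim (span3 a b c) = 3 /\ \dim (span3 a b c :&: X) = 2.
Proof.
rewrite !inE /= memv0 => /andP[/andP[aX a0] /andP[bX ba]] /andP[_ cX].
have sab : (<[a]> + <[b]> <= X)%VS by rewrite subv_add -!memvE aX bX.
have cab : c \notin (<[a]> + <[b]>)%VS by apply: contra cX; apply: (subvP sab).
have dY := dim_span3 a0 ba cab; split=> //.
have [_ _ cY] := mem_span3 a b c.
apply: (cap_two dY _ (line_sub2 a0 ba) cY cX).
by rewrite subv_cap sab /span3 addvSl.
Qed.

Lemma countK X : \dim X = 3 ->
  #|[pred W : VS | (\dim W == 3) && (\dim (W :&: X)%VS == 2)]| *
     ((q ^ 2 - 1) * (q ^ 2 - q) * (q ^ 3 - q ^ 2)) =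
  (q ^ 3 - 1) * (q ^ 3 - q) * (q ^ \dim (fullv : {vspace V}) - q ^ 3).
Proof.
move=> dX.
have cD : #|tri (indep X) (vdiff fullv X)| = (q ^ 3 - 1) * (q ^ 3 - q) * (q ^ \dim (fullv : {vspace V}) - q ^ 3).
  by rewrite card_tri card_indep' card_vdiff capfv dX.
rewrite -cD; symmetry; apply: (@dcount _ _ sp) => [[[a b] c]|W].
  rewrite /= => /andP[h1 h2]; have [d1 d2] := imgK h1 h2.
  by rewrite /sp /= d1 d2.
rewrite /= => /andP[/eqP dW /eqP dWX].
set P := (W :&: X)%VS.
transitivity #|tri (indep P) (vdiff W P)|; last first.
  by rewrite card_tri card_indep' card_vdiff (capv_idPr (capvSl W X)) dWX dW.
apply: eq_card => [[[a b] c]]; rewrite !inE /= !memv0.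
apply/idP/idP.
  move=> /andP[/andP[/andP[/andP[aX a0] /andP[bX ba]] /andP[_ cX]] /eqP e].
  have [aY bY cY] := mem_span3 a b c; rewrite /sp /= in e; rewrite e in aY bY cY.
  by rewrite !memv_cap aY aX a0 bY bX ba cY (negbTE cX).
move=> /andP[/andP[/andP[aP a0] /andP[bP ba]] /andP[cW cP]].
move: aP bP; rewrite !memv_cap => /andP[aW aX] /andP[bW bX].
have cX : c \notin X by move: cP; rewrite memv_cap cW.
have h1 : (a, b) \in indep X by rewrite !inE /= memv0 aX a0 bX ba.
have h2 : c \in vdiff fullv X by rewrite !inE memvf cX.
rewrite aX a0 bX ba memvf cX /=; apply/eqP.
have [d1 _] := imgK h1 h2.
exact: span3_eq.
Qed.

End CountK.


Section CountG.
Variables (F : finFieldType) (n : nat).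
Local Notation V := 'rV[F]_n.
Local Notation q := #|F|.
Local Notation VS := (vsT F n).
Implicit Types (U W P Q X T M Y Z : {vspace V}) (v a b c : V).

Definition pr (A B : pred V) := [pred t : V * V | A t.1 && B t.2].
Lemma card_pr A B : #|pr A B| = #|A| * #|B|.
Proof. exact: (@card_dpair _ _ A (fun _ => B)). Qed.

Lemma capeq W X Y : (Y <= X)%VS -> \dim (W :&: X) <= \dim (W :&: Y) -> (W :&: Y = W :&: X)%VS.
Proof. by move=> h1 h2; apply: sub_eqdim => //; apply: capvS. Qed.

Lemma imgG X T a b c : \dim X = 3 -> \dim T = 3 ->
  a \in vdiff (X :&: T) 0 -> b \in vdiff X (X :&: T) -> c \in vdiff T (X :&: T) ->
  [/\ \dim (span3 a b c) = 3, \dim (span3 a b c :&: X) = 2,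
      \dim (span3 a b c :&: T) = 2 & \dim (span3 a b c :&: (X :&: T)) = 1].
Proof.
move=> dX dT; rewrite !inE memv0 !memv_cap => /andP[/andP[aX aT] a0] /andP[bX].
rewrite bX /= => bT /andP[cT].
rewrite cT andbT => cX.
have am : (<[a]> <= X :&: T)%VS by rewrite -memvE memv_cap aX aT.
have ba : b \notin <[a]>%VS by apply: contra bT => /(subvP am); rewrite memv_cap => /andP[].
have ca : c \notin <[a]>%VS by apply: contra cX => /(subvP am); rewrite memv_cap => /andP[].
have sab : (<[a]> + <[b]> <= X)%VS by rewrite subv_add -!memvE aX bX.
have cab : c \notin (<[a]> + <[b]>)%VS by apply: contra cX; apply: (subvP sab).
have dY := dim_span3 a0 ba cab.
have [aY bY cY] := mem_span3 a b c.
set Y := span3 a b c in dY aY bY cY *.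
have hX : \dim (Y :&: X) = 2.
  apply: (cap_two dY _ (line_sub2 a0 ba) cY cX).
  by rewrite subv_cap sab subv_add -!memvE aY bY.
have hT : \dim (Y :&: T) = 2.
  apply: (cap_two dY _ (line_sub2 a0 ca) bY bT).
  by rewrite subv_cap !subv_add -!memvE aY cY aT cT.
split=> //.
have h1 : 1 <= \dim (Y :&: (X :&: T)).
  have : (<[a]> <= Y :&: (X :&: T))%VS by rewrite -memvE !memv_cap aY aX aT.
  by move/dimvS; rewrite dim_line.
case: (ltngtP (\dim (Y :&: (X :&: T))%VS) 1) => [h|h|//].
 by rewrite ltnNge h1 in h.
have e : (Y :&: (X :&: T) = Y :&: X)%VS by apply: capeq; [exact: capvSl | rewrite hX].
have : b \in (Y :&: (X :&: T))%VS by rewrite e memv_cap bY bX.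
by move/memv_capP => [_ /memv_capP[_ ]]; rewrite (negbTE bT).
Qed.
Lemma countG X T : \dim X = 3 -> \dim T = 3 ->
  #|[pred W : VS | [&& \dim W == 3, \dim (W :&: X)%VS == 2, \dim (W :&: T)%VS == 2
                     & \dim (W :&: (X :&: T))%VS == 1]]| *
     ((q - 1) * (q ^ 2 - q) * (q ^ 2 - q)) =
  (q ^ \dim (X :&: T) - 1) * (q ^ 3 - q ^ \dim (X :&: T)) * (q ^ 3 - q ^ \dim (X :&: T)).
Proof.
move=> dX dT; set m := (X :&: T)%VS.
have cD : #|tri (pr (vdiff m 0) (vdiff X m)) (vdiff T m)| =
   (q ^ \dim m - 1) * (q ^ 3 - q ^ \dim m) * (q ^ 3 - q ^ \dim m).
  rewrite card_tri card_pr !card_vdiff capv0 dimv0 dX dT.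
  by rewrite (capv_idPr (capvSl X T)) (capv_idPr (capvSr X T)).
rewrite -cD; symmetry; apply: (@dcount _ _ (@sp F n)) => [[[a b] c]|W].
  rewrite /= => /andP[/andP[h1 h2] h3]; have [d1 d2 d3 d4] := imgG dX dT h1 h2 h3.
  by rewrite /sp /= d1 d2 d3 d4.
rewrite /= => /and4P[/eqP dW /eqP dWX /eqP dWT /eqP dWm].
set l := (W :&: m)%VS; set P := (W :&: X)%VS; set Q := (W :&: T)%VS.
have lP : (l <= P)%VS by apply: capvS => //; exact: capvSl.
have lQ : (l <= Q)%VS by apply: capvS => //; exact: capvSr.
transitivity #|tri (pr (vdiff l 0) (vdiff P l)) (vdiff Q l)|; last first.
  rewrite card_tri card_pr !card_vdiff capv0 dimv0 (capv_idPr lP) (capv_idPr lQ).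
  by rewrite dWX dWT dWm expn1.
apply: eq_card => [[[a b] c]]; rewrite !inE /= !memv0 !memv_cap.
apply/idP/idP.
  case/andP => H /eqP e; have [aY bY cY] := mem_span3 a b c.
  rewrite /sp /= in e; rewrite e in aY bY cY; rewrite aY bY cY.
  by move: H; case: (a \in X); case: (a \in T); case: (a != 0%R); case: (b \in X); case: (b \in T); case: (c \in X); case: (c \in T).
case/and3P => [/and3P[/andP[/and3P[aW aX aT] a0] /andP[bW bX] bn] /andP[cW cT] cn].
move: bn cn; rewrite bW cW /= => bn cn.
have h1 : a \in vdiff m 0 by rewrite !inE memv_cap aX aT memv0 a0.
have h2 : b \in vdiff X m by rewrite !inE memv_cap bX; move: bn; rewrite bX.
have h3 : c \in vdiff T m by rewrite !inE memv_cap cT andbT; move: cn; rewrite cT andbT.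
have [d1 _ _ _] := imgG dX dT h1 h2 h3.
rewrite /sp /= (span3_eq d1 dW aW bW cW) eqxx andbT.
by rewrite bn cn aX aT a0 bX cT.
Qed.

Lemma imgA X T a b c : \dim (X :&: T) = 2 ->
  (a, b) \in indep (X :&: T) -> (c \notin X) && (c \notin T) ->
  [/\ \dim (span3 a b c) = 3, \dim (span3 a b c :&: X) = 2,
      \dim (span3 a b c :&: T) = 2 & \dim (span3 a b c :&: (X :&: T)) = 2].
Proof.
move=> dm; rewrite !inE /= memv0 => /andP[/andP[am a0] /andP[bm ba]] /andP[cX cT].
have sab : (<[a]> + <[b]> <= X :&: T)%VS by rewrite subv_add -!memvE am bm.
have sabX : (<[a]> + <[b]> <= X)%VS by apply: subv_trans sab (capvSl _ _).
have sabT : (<[a]> + <[b]> <= T)%VS by apply: subv_trans sab (capvSr _ _).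
have cab : c \notin (<[a]> + <[b]>)%VS by apply: contra cX; apply: (subvP sabX).
have dY := dim_span3 a0 ba cab.
have [aY bY cY] := mem_span3 a b c.
set Y := span3 a b c in dY aY bY cY *.
have ZY : (<[a]> + <[b]> <= Y)%VS by rewrite subv_add -!memvE aY bY.
split=> //.
- by apply: (cap_two dY _ (line_sub2 a0 ba) cY cX); rewrite subv_cap ZY.
- by apply: (cap_two dY _ (line_sub2 a0 ba) cY cT); rewrite subv_cap ZY.
have : \dim (<[a]> + <[b]>)%VS <= \dim (Y :&: (X :&: T)) by apply: dimvS; rewrite subv_cap ZY.
rewrite line_sub2 //; have := dcapr Y (X :&: T); rewrite dm => h1 h2.
by apply/eqP; rewrite eqn_leq h1 h2.
Qed.

Lemma countA X T : \dim X = 3 -> \dim T = 3 -> \dim (X :&: T) = 2 ->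
  #|[pred W : VS | [&& \dim W == 3, \dim (W :&: X)%VS == 2, \dim (W :&: T)%VS == 2
                     & \dim (W :&: (X :&: T))%VS == 2]]| *
     ((q ^ 2 - 1) * (q ^ 2 - q) * (q ^ 3 - q ^ 2)) =
  (q ^ 2 - 1) * (q ^ 2 - q) * ((q ^ \dim (fullv : {vspace V}) - q ^ 3) - (q ^ 3 - q ^ 2)).
Proof.
move=> dX dT dm; set m := (X :&: T)%VS.
set Cc := [pred v : V | (v \notin X) && (v \notin T)].
have cC : #|Cc| = (q ^ \dim (fullv : {vspace V}) - q ^ 3) - (q ^ 3 - q ^ 2).
  have := cardID (mem T) (vdiff fullv X).
  have -> : #|[predI vdiff fullv X & mem T]| = #|vdiff T X|.
    by apply: eq_card => v; rewrite !inE memvf andbC.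
  have -> : #|[predD vdiff fullv X & mem T]| = #|Cc|.
    by apply: eq_card => v; rewrite !inE memvf andbC.
  rewrite !card_vdiff capfv capvC -/m dm dX dT => <-; by rewrite addKn.
have cD : #|tri (indep m) Cc| =
   (q ^ 2 - 1) * (q ^ 2 - q) * ((q ^ \dim (fullv : {vspace V}) - q ^ 3) - (q ^ 3 - q ^ 2)).
  by rewrite card_tri card_indep' cC dm.
rewrite -cD; symmetry; apply: (@dcount _ _ (@sp F n)) => [[[a b] c]|W].
  rewrite /= => /andP[h1 h2]; have [d1 d2 d3 d4] := imgA dm h1 h2.
  by rewrite /sp /= d1 d2 d3 d4.
rewrite /= => /and4P[/eqP dW /eqP dWX /eqP dWT /eqP dWm].
transitivity #|tri (indep m) (vdiff W m)|; last first.
  by rewrite card_tri card_indep' card_vdiff dm dWm dW.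
have eX : (W :&: m = W :&: X)%VS by apply: capeq; [exact: capvSl | rewrite dWX dWm].
have eT : (W :&: m = W :&: T)%VS by apply: capeq; [exact: capvSr | rewrite dWT dWm].
have mW : (m <= W)%VS.
  apply/capv_idPr; apply: sub_eqdim; first exact: capvSr.
  by rewrite dWm dm.
apply: eq_card => [[[a b] c]]; rewrite !inE /=.
set I := [&& (a \in m) && _, _ & _].
apply/idP/idP.
  case/andP => /and3P[hI cX cT] /eqP e.
  have [aY bY cY] := mem_span3 a b c; rewrite /sp /= in e; rewrite e in aY bY cY.
  by rewrite hI cY /=; apply: contra cX; rewrite memv_cap => /andP[].
case/and3P => hI cW cm.
have cX : c \notin X.
  apply: contra cm => cX; have : c \in (W :&: X)%VS by rewrite memv_cap cW cX.
  by rewrite -eX memv_cap => /andP[].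
have cT : c \notin T.
  apply: contra cm => cT; have : c \in (W :&: T)%VS by rewrite memv_cap cW cT.
  by rewrite -eT memv_cap => /andP[].
have h1 : (a, b) \in indep m by rewrite inE.
have h2 : (c \notin X) && (c \notin T) by rewrite cX cT.
have [d1 _ _ _] := imgA dm h1 h2.
case/and3P: (hI) => /andP[am _] bm _.
have aW : a \in W by apply: (subvP mW).
have bW : b \in W by apply: (subvP mW).
by rewrite hI cX cT /sp /= (span3_eq d1 dW aW bW cW) eqxx.
Qed.

End CountG.


Definition pb (P : Prop) : bool := if excluded_middle_informative P then true else false.
Lemma pbP P : reflect P (pb P).
Proof. by rewrite /pb; case: excluded_middle_informative => h; constructor. Qed.

Definition cpick (T : Type) (P : T -> Prop) (d : T) : T :=
  match excluded_middle_informative (exists x, P x) with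
  | left h => proj1_sig (constructive_indefinite_description _ h)
  | right _ => d end.
Lemma cpickP (T : Type) (P : T -> Prop) d : (exists x, P x) -> P (cpick P d).
Proof.
rewrite /cpick; case: excluded_middle_informative => // h _.
exact: proj2_sig (constructive_indefinite_description _ h).
Qed.

Section Spread.
Variables (F : finFieldType) (n : nat) (S : grass_vertex F n 3 -> Prop).
Hypothesis hS : is_spread3 S.
Local Notation V := 'rV[F]_n.
Local Notation q := #|F|.
Local Notation VS := (vsT F n).
Implicit Types (U W P Q X T M Y Z : {vspace V}) (v a b c : V).

Definition SV U : Prop := exists x : grass_vertex F n 3, S x /\ sval x = U.

Lemma SV_dim U : SV U -> \dim U = 3.
Proof. by case=> x [_ <-]; apply/eqP; exact: (svalP x). Qed.

Lemma spread_uniq T1 T2 v : SV T1 -> SV T2 -> v != 0%R -> v \in T1 -> v \in T2 -> T1 = T2.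
Proof.
case=> x1 [S1 <-] [x2 [S2 <-]] v0 h1 h2.
have [U [_ Hu]] := hS v0.
by rewrite -(Hu x1 (conj S1 h1)) -(Hu x2 (conj S2 h2)).
Qed.

Lemma spread_cap T1 T2 : SV T1 -> SV T2 -> 0 < \dim (T1 :&: T2) -> T1 = T2.
Proof.
move=> s1 s2 /dimpos_vec[v]; rewrite memv_cap => /andP[h1 h2] v0.
exact: spread_uniq s1 s2 v0 h1 h2.
Qed.

Lemma spread_cover v : v != 0%R -> exists T, SV T /\ v \in T.
Proof. by move=> v0; have [U [[SU vU] _]] := hS v0; exists (sval U); split=> //; exists U. Qed.

Lemma adj_notSV T W : SV T -> \dim (T :&: W) = 2 -> ~ SV W.
Proof.
move=> sT d sW; have e : T = W by apply: spread_cap => //; rewrite d.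
by move: d; rewrite e capvv (SV_dim sW).
Qed.

Lemma meetW W P Q : \dim W = 3 -> (P <= W)%VS -> (Q <= W)%VS -> \dim P = 2 -> \dim Q = 2 ->
  0 < \dim (P :&: Q).
Proof. by move=> dW PW QW dP dQ; apply: (meet PW QW); rewrite dW dP dQ. Qed.

Lemma adj_uniq T1 T2 W : SV T1 -> SV T2 -> \dim W = 3 ->
  \dim (T1 :&: W) = 2 -> \dim (T2 :&: W) = 2 -> T1 = T2.
Proof.
move=> s1 s2 dW d1 d2; apply: spread_cap => //.
have := meetW dW (capvSr T1 W) (capvSr T2 W) d1 d2.
move=> h; apply: leq_trans h _; apply: dimvS; apply: capvS; exact: capvSl.
Qed.

Definition spr (v : V) : VS := cpick (fun T : VS => SV T /\ v \in T) 0%VS.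

Lemma sprP v : v != 0%R -> SV (spr v) /\ v \in spr v.
Proof. move=> v0; have [T h] := spread_cover v0; exact: (@cpickP VS (fun T : VS => SV T /\ v \in T) 0%VS (ex_intro _ T h)). Qed.

Definition R U M := [pred T : VS | pb (SV T) && [exists v, (v \in U) && (v \notin M) && (v \in (T : {vspace V}))]].

Lemma countR U M : (M <= U)%VS ->
  (forall T v, SV T -> v \in U -> v \notin M -> v \in T -> \dim (U :&: T) = 1) ->
  #|R U M| * (q - 1) = q ^ \dim U - q ^ \dim M.
Proof.
move=> MU H.
have cD : #|vdiff U M| = q ^ \dim U - q ^ \dim M by rewrite card_vdiff (capv_idPr MU).
rewrite -cD; symmetry; apply: (@dcount _ _ spr) => [v|T].
  rewrite !inE => /andP[vU vM].
  have v0 : v != 0%R by apply: contraNneq vM => ->; rewrite mem0v.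
  have [s1 s2] := sprP v0.
  by apply/andP; split; [apply/pbP | apply/existsP; exists v; rewrite vU vM].
rewrite /= => /andP[/pbP sT /existsP[w /andP[/andP[wU wM] wT]]].
have dUT := H _ _ sT wU wM wT.
transitivity #|vdiff (U :&: T) M|; last first.
  rewrite card_vdiff dUT expn1; congr (_ - _).
  suff -> : \dim (U :&: T :&: M) = 0 by [].
  have : \dim (U :&: T :&: M) <= 1 by apply: leq_trans (dcapl _ _) _; rewrite dUT.
  case: (ltngtP (\dim (U :&: T :&: M)%VS) 1) => [|//|e _].
    by case: (\dim _).
  have e2 : (U :&: T :&: M = U :&: T)%VS by apply: sub_eqdim; [exact: capvSl | rewrite e dUT].
  have : w \in (U :&: T :&: M)%VS by rewrite e2 memv_cap wU wT.
  by rewrite memv_cap (negbTE wM) andbF.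
apply: eq_card => v; rewrite !inE memv_cap.
apply/idP/idP.
  case/andP=> /andP[vU vM] /eqP e.
  have v0 : v != 0%R by apply: contraNneq vM => ->; rewrite mem0v.
  by have [_] := sprP v0; rewrite e => ->; rewrite vU vM.
case/andP => /andP[vU vT] vM; rewrite vU vM /=.
have v0 : v != 0%R by apply: contraNneq vM => ->; rewrite mem0v.
have [s1 s2] := sprP v0.
by apply/eqP; apply: spread_uniq s1 sT v0 s2 vT.
Qed.

End Spread.


Lemma div_eq a b c : a * c = b -> 0 < c -> a = b %/ c.
Proof. by move=> <- c0; rewrite mulnK. Qed.

Section Layers.
Variables (F : finFieldType) (n : nat) (S : grass_vertex F n 3 -> Prop).
Hypothesis hS : is_spread3 S.
Local Notation V := 'rV[F]_n.
Local Notation q := #|F|.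
Local Notation VS := (vsT F n).
Local Notation SV := (SV S).
Implicit Types (U W P Q X T M Y Z : {vspace V}) (v a b c : V).

Lemma q_gt1 : 1 < q. Proof. exact: card_finNzRing_gt1. Qed.
Lemma qpos i j : j < i -> 0 < q ^ i - q ^ j.
Proof. by move=> h; rewrite subn_gt0 ltn_exp2l // q_gt1. Qed.
Lemma q1pos : 0 < q - 1. Proof. by rewrite subn_gt0 q_gt1. Qed.
Lemma q2pos : 0 < q ^ 2 - q. Proof. by rewrite -{2}(expn1 q) qpos. Qed.
Lemma q21pos : 0 < q ^ 2 - 1. Proof. by rewrite -(expn0 q) qpos. Qed.

Definition E W : Prop := exists T, SV T /\ \dim (T :&: W) = 2.
Definition dist W : nat := if pb (SV W) then 0 else if pb (E W) then 1 else 2.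

Lemma E_notSV W : E W -> ~ SV W.
Proof. by case=> T [sT d]; exact: (adj_notSV hS sT d). Qed.

Lemma dist0 W : (dist W == 0) = pb (SV W).
Proof. by rewrite /dist; case: pbP => //; case: pbP. Qed.
Lemma dist1 W : (dist W == 1) = pb (E W).
Proof.
rewrite /dist; case: pbP => [sW|_]; last by case: pbP.
by case: pbP => // /E_notSV.
Qed.
Lemma dist2 W : (dist W == 2) = ~~ pb (SV W) && ~~ pb (E W).
Proof. by rewrite /dist; case: pbP => //; case: pbP. Qed.
Lemma dist_le2 W : dist W <= 2.
Proof. by rewrite /dist; case: pbP => //; case: pbP. Qed.

Definition Nb X := [pred W : VS | (\dim W == 3) && (\dim (W :&: X)%VS == 2)].
Definition cnt X j := #|[pred W : VS | [&& \dim W == 3, \dim (W :&: X)%VS == 2 & dist W == j]]|.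

Lemma cnt_sum X : #|Nb X| = cnt X 0 + cnt X 1 + cnt X 2.
Proof.
rewrite -(cardID [pred W : VS | dist W == 0] (Nb X)).
rewrite -(cardID [pred W : VS | dist W == 1] [predD Nb X & [pred W : VS | dist W == 0]]).
rewrite addnA; congr (_ + _ + _); apply: eq_card => W; rewrite !inE.
all: by have := dist_le2 W; case: (dist W) => [|[|[|]]] //= _; case: (\dim W == 3); case: (\dim (W :&: X)%VS == 2).
Qed.

Definition cK := (q ^ 3 - 1) * (q ^ 3 - q) * (q ^ \dim (fullv : {vspace V}) - q ^ 3) %/
                 ((q ^ 2 - 1) * (q ^ 2 - q) * (q ^ 3 - q ^ 2)).

Lemma NbK X : \dim X = 3 -> #|Nb X| = cK.
Proof.
move=> dX; apply: div_eq; first exact: countK.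
by rewrite !muln_gt0 q21pos q2pos qpos.
Qed.

Lemma cnt0_0 X : SV X -> cnt X 0 = 0.
Proof.
move=> sX; apply: eq_card0 => W; rewrite !inE dist0.
apply/and3P => [[_ /eqP d /pbP sW]].
have e : (W : {vspace V}) = X by apply: (spread_cap hS sW sX); rewrite d.
by move: d; rewrite e capvv (SV_dim sX).
Qed.

Lemma cnt0_2 X : SV X -> cnt X 2 = 0.
Proof.
move=> sX; apply: eq_card0 => W; rewrite !inE dist2.
apply/and3P => [[_ /eqP d /andP[_ /pbP []]]].
by exists X; split=> //; rewrite capvC.
Qed.

End Layers.


Section Counts.
Variables (F : finFieldType) (n : nat) (S : grass_vertex F n 3 -> Prop).
Hypothesis hS : is_spread3 S.
Local Notation V := 'rV[F]_n.
Local Notation q := #|F|.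
Local Notation VS := (vsT F n).
Local Notation SV := (SV S).
Local Notation E := (E S).
Local Notation dist := (dist S).
Local Notation cnt := (cnt S).
Implicit Types (U W P Q X T M Y Z : {vspace V}) (v a b c : V).

Definition sprW W : VS := cpick (fun T : VS => SV T /\ \dim (T :&: W) = 2) 0%VS.
Lemma sprWP W : E W -> SV (sprW W) /\ \dim (sprW W :&: W) = 2.
Proof. by case=> T h; exact: (@cpickP VS (fun T : VS => SV T /\ \dim (T :&: W) = 2) 0%VS (ex_intro _ (T : VS) h)). Qed.

Definition Gpred X T := [pred W : VS | [&& \dim W == 3, \dim (W :&: X)%VS == 2,
   \dim (W :&: T)%VS == 2 & \dim (W :&: (X :&: T))%VS == 1]].

Definition cG := ((q - 1) * (q ^ 3 - q) * (q ^ 3 - q)) %/ ((q - 1) * (q ^ 2 - q) * (q ^ 2 - q)).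

Lemma cardG X T : \dim X = 3 -> SV T -> \dim (X :&: T) = 1 -> #|Gpred X T| = cG.
Proof.
move=> dX sT d; apply: div_eq.
  by have := countG dX (SV_dim sT); rewrite d expn1.
by rewrite !muln_gt0 q1pos q2pos.
Qed.

Lemma fiberW X T W : SV T -> \dim (X :&: T) = 1 ->
  ([&& \dim W == 3, \dim (W :&: X)%VS == 2 & pb (E W)] && (sprW W == T :> VS)) =
  ([&& \dim W == 3, \dim (W :&: X)%VS == 2, \dim (W :&: T)%VS == 2 & \dim (W :&: (X :&: T))%VS == 1]).
Proof.
move=> sT dXT; apply/idP/idP.
  case/andP => /and3P[/eqP dW /eqP dWX /pbP eW] /eqP e.
  have [_] := sprWP eW; rewrite e capvC => dWT.
  rewrite dW dWX dWT !eqxx /=.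
  have h := meetW dW (capvSl W X) (capvSl W T) dWX dWT.
  have h2 : \dim (W :&: X :&: (W :&: T)) <= \dim (W :&: (X :&: T)).
    apply: dimvS; rewrite !subv_cap; apply/and3P; split.
    - exact: subv_trans (capvSl _ _) (capvSl _ _).
    - exact: subv_trans (capvSl _ _) (capvSr _ _).
    - exact: subv_trans (capvSr _ _) (capvSr _ _).
  have h3 := dcapr W (X :&: T); rewrite dXT in h3.
  by rewrite eqn_leq h3 (leq_trans h h2).
case/and4P => /eqP dW /eqP dWX /eqP dWT _.
have eW : E W by exists T; rewrite capvC.
rewrite dW dWX !eqxx /=; apply/andP; split; first exact/pbP.
have [s1 d1] := sprWP eW.
apply/eqP; apply: (adj_uniq hS s1 sT dW d1); by rewrite capvC.
Qed.

Definition cR2 := (q ^ 3 - 1) %/ (q - 1).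

Section L2.
Variable X : {vspace V}.
Hypotheses (dX : \dim X = 3) (nS : ~ SV X) (nE : ~ E X).

Lemma l2_line T v : SV T -> v \in X -> v \notin (0%VS : {vspace V}) -> v \in T -> \dim (X :&: T) = 1.
Proof.
move=> sT vX v0 vT.
have h1 : 1 <= \dim (X :&: T).
  have : (<[v]> <= X :&: T)%VS by rewrite -memvE memv_cap vX vT.
  by move/dimvS; rewrite dim_line // -memv0.
have h3 := dcapl X T; rewrite dX in h3.
case: (ltngtP (\dim (X :&: T)%VS) 1) => [|h|//]; first by case: (\dim _) h1.
case: (ltngtP (\dim (X :&: T)%VS) 2) => [|h'|e]; first by case: (\dim _) h => [|[|]].
  have e3 : \dim (X :&: T) = 3 by apply/eqP; rewrite eqn_leq h3 h'.
  have eX : (X :&: T = X)%VS by apply: sub_eqdim; [exact: capvSl | rewrite e3 dX].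
  have eT : (X :&: T = T)%VS by apply: sub_eqdim; [exact: capvSr | rewrite e3 (SV_dim sT)].
  by case: nS; rewrite -eX eT.
by case: nE; exists T; split=> //; rewrite capvC.
Qed.

Lemma cnt2_0 : cnt X 0 = 0.
Proof.
apply: eq_card0 => W; rewrite !inE dist0.
apply/and3P => [[_ /eqP d /pbP sW]].
by case: nE; exists W.
Qed.

Lemma cardR2 : #|R S X 0| = cR2.
Proof.
apply: div_eq; last exact: q1pos.
rewrite (countR hS (sub0v X)) ?dimv0 ?dX // => T v sT vX v0 vT.
exact: (l2_line sT vX v0 vT).
Qed.

Lemma cnt2_1 : cnt X 1 = cR2 * cG.
Proof.
rewrite -cardR2 /cnt; apply: (@dcount VS VS sprW) => [W|T].
  rewrite /= (dist1 hS) => /and3P[/eqP dW /eqP dWX /pbP eW].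
  have [sT dTW] := sprWP eW.
  have h := meetW dW (capvSr (sprW W) W) (capvSl W X) dTW dWX.
  have [v] := dimpos_vec h; rewrite !memv_cap => /andP[/andP[vT _] /andP[_ vX]] v0.
  apply/andP; split; first exact/pbP.
  by apply/existsP; exists v; rewrite vX vT memv0 v0.
rewrite /= => /andP[/pbP sT /existsP[w /andP[/andP[wX w0] wT]]].
have dXT := l2_line sT wX w0 wT.
rewrite -(cardG dX sT dXT); apply: eq_card => W; rewrite !inE (dist1 hS).
exact: fiberW.
Qed.

End L2.

End Counts.


Section L1.
Variables (F : finFieldType) (n : nat) (S : grass_vertex F n 3 -> Prop).
Hypothesis hS : is_spread3 S.
Local Notation V := 'rV[F]_n.
Local Notation q := #|F|.
Local Notation VS := (vsT F n).
Local Notation SV := (SV S).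
Local Notation E := (E S).
Local Notation dist := (dist S).
Local Notation cnt := (cnt S).
Local Notation sprW := (sprW S).
Implicit Types (U W P Q X T M Y Z : {vspace V}) (v a b c : V).

Lemma meet_cap W X T : \dim W = 3 -> \dim (W :&: X) = 2 -> \dim (W :&: T) = 2 ->
  1 <= \dim (W :&: (X :&: T)).
Proof.
move=> dW dWX dWT.
have h := meetW dW (capvSl W X) (capvSl W T) dWX dWT.
apply: (leq_trans h); apply: dimvS; rewrite !subv_cap; apply/and3P; split.
- exact: subv_trans (capvSl _ _) (capvSl _ _).
- exact: subv_trans (capvSl _ _) (capvSr _ _).
- exact: subv_trans (capvSr _ _) (capvSr _ _).
Qed.

Definition cGm2 := ((q ^ 2 - 1) * (q ^ 3 - q ^ 2) * (q ^ 3 - q ^ 2)) %/ ((q - 1) * (q ^ 2 - q) * (q ^ 2 - q)).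
Definition cA := ((q ^ 2 - 1) * (q ^ 2 - q) * ((q ^ \dim (fullv : {vspace V}) - q ^ 3) - (q ^ 3 - q ^ 2)))
   %/ ((q ^ 2 - 1) * (q ^ 2 - q) * (q ^ 3 - q ^ 2)).
Definition cR1 := (q ^ 3 - q ^ 2) %/ (q - 1).

Variable X : {vspace V}.
Hypotheses (dX : \dim X = 3) (nS : ~ SV X) (eX : E X).

Local Notation T0 := (sprW X).
Let sT0 : SV T0. Proof. by have [] := sprWP eX. Qed.
Let dT0X : \dim (T0 :&: X) = 2. Proof. by have [] := sprWP eX. Qed.
Let dXT0 : \dim (X :&: T0) = 2. Proof. by rewrite capvC dT0X. Qed.

Lemma cnt1_0 : cnt X 0 = 1.
Proof.
apply: (@eq_card1 _ (T0 : VS)) => W; rewrite !inE (dist0 S) /=.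
apply/idP/idP.
  case/and3P => /eqP dW /eqP dWX /pbP sW; apply/eqP.
  exact: (adj_uniq hS sW sT0 dX dWX dT0X).
move/eqP => ->; rewrite (SV_dim sT0) dT0X !eqxx /=; exact/pbP.
Qed.

Lemma l1_line T v : SV T -> v \in X -> v \notin (X :&: T0)%VS -> v \in T -> \dim (X :&: T) = 1.
Proof.
move=> sT vX vM vT.
have v0 : v != 0%R by apply: contraNneq vM => ->; rewrite mem0v.
have h1 : 1 <= \dim (X :&: T).
  have : (<[v]> <= X :&: T)%VS by rewrite -memvE memv_cap vX vT.
  by move/dimvS; rewrite dim_line.
have h3 := dcapl X T; rewrite dX in h3.
case: (ltngtP (\dim (X :&: T)%VS) 1) => [|h|//]; first by case: (\dim _) h1.
case: (ltngtP (\dim (X :&: T)%VS) 2) => [|h'|e]; first by case: (\dim _) h => [|[|]].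
  have e3 : \dim (X :&: T) = 3 by apply/eqP; rewrite eqn_leq h3 h'.
  have eX' : (X :&: T = X)%VS by apply: sub_eqdim; [exact: capvSl | rewrite e3 dX].
  have eT : (X :&: T = T)%VS by apply: sub_eqdim; [exact: capvSr | rewrite e3 (SV_dim sT)].
  by case: nS; rewrite -eX' eT.
have eT : T = T0 by apply: (adj_uniq hS sT sT0 dX); rewrite // capvC.
by move: vM; rewrite memv_cap vX -eT vT.
Qed.

Lemma cardR1 : #|R S X (X :&: T0)| = cR1.
Proof.
apply: div_eq; last exact: q1pos.
rewrite (countR hS (capvSl X T0)) ?dXT0 ?dX // => T v sT vX v0 vT.
exact: (l1_line sT vX v0 vT).
Qed.

Lemma cnt1_1 : cnt X 1 = cGm2 + cA + cR1 * cG F.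
Proof.
rewrite /cnt -(cardID [pred W : VS | \dim (W :&: T0)%VS == 2]).
congr (_ + _).
  rewrite -(cardID [pred W : VS | \dim (W :&: (X :&: T0))%VS == 1]).
  congr (_ + _).
    transitivity #|Gpred X T0|.
      apply: eq_card => W; rewrite !inE (dist1 hS).
      apply/idP/idP; first by case/andP => /andP[/and3P[-> -> _] ->] ->.
      case/and4P => -> -> /eqP dWT ->; rewrite dWT eqxx /=.
      have eW : E W by exists T0; split=> //; rewrite capvC.
      by case: pbP.
    apply: div_eq; first by have := countG dX (SV_dim sT0); rewrite dXT0.
    by rewrite !muln_gt0 q1pos q2pos.
  transitivity #|[pred W : VS | [&& \dim W == 3, \dim (W :&: X)%VS == 2, \dim (W :&: T0)%VS == 2
                     & \dim (W :&: (X :&: T0))%VS == 2]]|.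
    apply: eq_card => W; rewrite !inE (dist1 hS).
    apply/idP/idP.
      case/and3P => ne1 /and3P[/eqP dW /eqP dWX _] /eqP dWT.
      rewrite dW dWX dWT !eqxx /=.
      have h1 := meet_cap dW dWX dWT.
      have h2 := dcapr W (X :&: T0); rewrite dXT0 in h2.
      move: ne1 h1 h2; case: (\dim _) => [|[|[|]]] //.
    case/and4P => /eqP dW /eqP dWX /eqP dWT /eqP dWm.
    rewrite dW dWX dWT dWm !eqxx /= andbT; apply/pbP.
    by exists T0; split=> //; rewrite capvC.
  apply: div_eq; first exact: (countA dX (SV_dim sT0) dXT0).
  by rewrite !muln_gt0 q21pos q2pos qpos.
rewrite -cardR1; apply: (@dcount VS VS sprW) => [W|T].
  move=> /andP[nT0 /and3P[/eqP dW /eqP dWX]]; rewrite (dist1 hS) => /pbP eW.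
  have [sT dTW] := sprWP eW.
  have h := meetW dW (capvSr (sprW W) W) (capvSl W X) dTW dWX.
  have [v] := dimpos_vec h; rewrite !memv_cap => /andP[/andP[vT _] /andP[_ vX]] v0.
  apply/andP; split; first exact/pbP.
  apply/existsP; exists v; rewrite vX vT memv_cap vX /= andbT.
  apply: contra nT0 => vT0.
  have e : (sprW W : {vspace V}) = T0 := spread_uniq hS sT sT0 v0 vT vT0.
  by rewrite inE -e capvC dTW.
rewrite /= => /andP[/pbP sT /existsP[w /andP[/andP[wX wM] wT]]].
have dXT := l1_line sT wX wM wT.
rewrite -(cardG dX sT dXT); apply: eq_card => W; rewrite !inE (dist1 hS).
rewrite -(fiberW hS W sT dXT).
case e: (sprW W == T :> VS); rewrite ?andbF ?andbT //.
case: pbP => [eW|_]; last by rewrite !andbF.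
case dW: (\dim W == 3); last by rewrite !andbF.
rewrite !andbT /=.
suff -> : \dim (W :&: T0) != 2 by [].
apply/eqP => dWT0.
have [s1 d1] := sprWP eW; move/eqP: e => e.
have eT : (T0 : {vspace V}) = T.
  rewrite -e; apply: (adj_uniq hS sT0 s1 (eqP dW)) => //; by rewrite capvC.
by move: wM; rewrite memv_cap wX eT wT.
Qed.


End L1.


Section Graph.
Variables (F : finFieldType) (n : nat) (S : grass_vertex F n 3 -> Prop).
Hypothesis hS : is_spread3 S.
Local Notation V := 'rV[F]_n.
Local Notation q := #|F|.
Local Notation VS := (vsT F n).
Local Notation SV := (SV S).
Local Notation E := (E S).
Local Notation dist := (dist S).
Local Notation cnt := (cnt S).
Local Notation GV := (grass_vertex F n 3).
Local Notation adj := (@grass_adj F n 3).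
Implicit Types (U W P Q X T M Y Z : {vspace V}) (v a b c : V).

Definition distv (x : GV) := dist (sval x).

Lemma SV_vert (x : GV) : SV (sval x) <-> S x.
Proof.
split; last by move=> h; exists x.
by case=> y [Sy e]; have -> : x = y by apply: val_inj.
Qed.

Lemma reach_dist j (c x : GV) : S c -> reach adj j c x -> distv x <= j.
Proof.
case: j => [|[|j]] Sc /=.
- move=> <-; have : dist (sval c) == 0 by rewrite (dist0 S); apply/pbP; exists c.
  by rewrite /distv => /eqP ->.
- case=> [<-|[z [<- a]]].
    have : dist (sval c) == 0 by rewrite (dist0 S); apply/pbP; exists c.
    by rewrite /distv => /eqP ->.
  rewrite /distv; have := dist_le2 S (sval x).
  have : dist (sval x) != 2.
    rewrite (dist2 S) negb_and !negbK; apply/orP; right.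
    have : E (sval x) by exists (sval c); split; [exists c | exact a].
    by case: pbP.
  by case: (dist _) => [|[|[|]]].
- move=> _; apply: leq_trans (dist_le2 S _) _; done.
Qed.

Lemma reach2_constr X : \dim X = 3 -> ~ SV X -> ~ E X ->
  exists T Z, [/\ SV T, \dim Z = 3, \dim (T :&: Z) = 2 & \dim (Z :&: X) = 2].
Proof.
move=> dX nS nE.
have [v vX v0] : exists2 v, v \in X & v != 0%R by apply: dimpos_vec; rewrite dX.
have [sT vT] := sprP hS v0.
set T := (spr S v : {vspace V}) in sT vT.
have dXT : \dim (X :&: T) = 1 by apply: (l2_line dX nS nE sT vX _ vT); rewrite memv0.
have dT := SV_dim sT.
have [a aX aT] : exists2 a, a \in X & a \notin T.
  apply/subvPn; apply/negP => XT.
  have e : (X :&: T = X)%VS by apply/capv_idPl.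
  by move: dXT; rewrite e dX.
have [w wT wX] : exists2 w, w \in T & w \notin X.
  apply/subvPn; apply/negP => TX.
  have e : (X :&: T = T)%VS by apply/capv_idPr.
  by move: dXT; rewrite e dT.
have vl : (<[v]> <= X :&: T)%VS by rewrite -memvE memv_cap vX vT.
have av : a \notin <[v]>%VS by apply: contra aT => /(subvP vl); rewrite memv_cap => /andP[].
have wv : w \notin <[v]>%VS by apply: contra wX => /(subvP vl); rewrite memv_cap => /andP[].
have sva : (<[v]> + <[a]> <= X)%VS by rewrite subv_add -!memvE vX aX.
have wva : w \notin (<[v]> + <[a]>)%VS by apply: contra wX; apply: (subvP sva).
have dZ := dim_span3 v0 av wva.
have [vZ aZ wZ] := mem_span3 v a w.
exists T, (span3 v a w); split=> //.
  rewrite capvC; apply: (cap_two dZ _ (line_sub2 v0 wv) aZ aT).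
  by rewrite subv_cap !subv_add -!memvE vZ wZ vT wT.
apply: (cap_two dZ _ (line_sub2 v0 av) wZ wX).
by rewrite subv_cap sva subv_add -!memvE vZ aZ.
Qed.

Lemma dist_reach (x : GV) : exists2 c, S c & reach adj (distv x) c x.
Proof.
have := dist_le2 S (sval x); rewrite /distv.
case De: (dist (sval x)) => [|[|[|]]] // _.
- move/eqP: De; rewrite (dist0 S) => /pbP /SV_vert Sx; by exists x.
- move/eqP: De; rewrite (dist1 hS) => /pbP [T [[c [Sc ec]] dTX]].
  exists c => //=; right; exists c; split=> //.
  by rewrite /grass_adj ec dTX.
- move/eqP: De; rewrite (dist2 S) => /andP[/pbP nS /pbP nE].
  have dX : \dim (sval x) = 3 by apply/eqP; exact: (svalP x).
  have [T [Z [[c [Sc ec]] dZ dTZ dZX]]] := reach2_constr dX nS nE.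
  pose z : GV := exist _ Z (introT eqP dZ).
  exists c => //=; right; exists z; split.
    by right; exists c; split=> //; rewrite /grass_adj ec /=.
  by rewrite /grass_adj /=.
Qed.

Lemma layer_iff i (x : GV) : layer adj S i x <-> distv x = i.
Proof.
split.
  case=> [[c [Sc r]] H]; have h1 := reach_dist Sc r.
  case: (ltngtP (distv x) i) => [lt|gt|//].
    by have [c' Sc' r'] := dist_reach x; case: (H _ _ lt Sc' r').
  by move: h1; rewrite leqNgt gt.
move=> e; split.
  by have [c Sc r] := dist_reach x; exists c; rewrite -e.
move=> j c lt Sc r; have := reach_dist Sc r; rewrite e leqNgt lt.
done.
Qed.

Definition tov (W : VS) : option GV := insub (W : {vspace V}).

Lemma tovK : ocancel tov (fun y : GV => (sval y : VS)).
Proof. by move=> W; rewrite /tov; case: insubP => //= u _ ->. Qed.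
Lemma tovK' : pcancel (fun y : GV => (sval y : VS)) tov.
Proof. by move=> y; rewrite /tov valK. Qed.

Lemma num_cnt (x : GV) j :
  num_exactly (fun y => adj x y /\ layer adj S j y) (cnt (sval x) j).
Proof.
set P := [pred W : VS | [&& \dim W == 3, \dim (W :&: sval x)%VS == 2 & dist W == j]].
exists (pmap tov (enum P)); split.
- apply: (@pmap_uniq VS GV tov _ tovK). exact: enum_uniq.
- rewrite size_pmap /cnt cardE -/P.
  rewrite -[RHS]count_predT; apply: eq_in_count => W; rewrite mem_enum.
  by rewrite /tov isSome_insub => /and3P[].
move=> y; rewrite (can2_mem_pmap tovK tovK') mem_enum !inE.
rewrite (svalP y) /= capvC layer_iff /distv /grass_adj /=.
split; first by case/andP => /eqP -> /eqP ->.
by case=> -> ->; rewrite !eqxx.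
Qed.

End Graph.


Lemma sq1 m : 0 < m -> m ^ 2 - 1 = (m + 1) * (m - 1).
Proof. move=> h; nia. Qed.
Lemma big_ineq m k : 1 < m -> 6 <= k -> (m + 1) * m ^ 4 < m ^ k.
Proof.
move=> h hk; apply: (@leq_trans (m ^ 2 * m ^ 4)).
  rewrite ltn_mul2r expn_gt0 (ltnW h) /=; nia.
by rewrite -expnD leq_exp2l.
Qed.

Section Exist2.
Variables (F : finFieldType) (n : nat) (S : grass_vertex F n 3 -> Prop).
Hypothesis hS : is_spread3 S.
Hypothesis n6 : 6 <= n.
Local Notation V := 'rV[F]_n.
Local Notation q := #|F|.
Local Notation VS := (vsT F n).
Local Notation SV := (SV S).
Local Notation E := (E S).
Implicit Types (U W P Q X T M Y Z : {vspace V}) (v a b c : V).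

Lemma dimfull : \dim (fullv : {vspace V}) = n.
Proof. rewrite dimvf dim_matrix; exact: mul1n. Qed.

Lemma exists_far : exists X, [/\ \dim X = 3, ~ SV X & ~ E X].
Proof.
have [a1 _ a0] : exists2 v, v \in (fullv : {vspace V}) & v != 0%R.
  by apply: dimpos_vec; rewrite dimfull; apply: leq_trans n6.
have [sA aA] := sprP hS a0; set A := (spr S a1 : {vspace V}) in sA aA.
have [b _ bA] : exists2 b, b \in (fullv : {vspace V}) & b \notin A.
  apply/subvPn; apply/negP => fA; have := dimvS fA.
  by rewrite dimfull (SV_dim sA); move/(leq_trans n6).
have b0 : b != 0%R by apply: contraNneq bA => ->; rewrite mem0v.
have ba : b \notin <[a1]>%VS by apply: contra bA => /vlineP[k ->]; rewrite memvZ.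
set Pi := (<[a1]> + <[b]>)%VS.
have dPi : \dim Pi = 2 by rewrite line_sub2.
have aPi : a1 \in Pi by apply: (subvP (addvSl _ _)); exact: memv_line.
have bPi : b \in Pi by apply: (subvP (addvSr _ _)); exact: memv_line.
have H : forall T v, SV T -> v \in Pi -> v \notin (0%VS : {vspace V}) -> v \in T -> \dim (Pi :&: T) = 1.
  move=> T v sT vP v0 vT.
  have v0' : v != 0%R by rewrite -memv0.
  have h1 : 1 <= \dim (Pi :&: T).
    have : (<[v]> <= Pi :&: T)%VS by rewrite -memvE memv_cap vP vT.
    by move/dimvS; rewrite dim_line.
  have h2 := dcapl Pi T; rewrite dPi in h2.
  case: (ltngtP (\dim (Pi :&: T)%VS) 1) => [|h|//]; first by case: (\dim _) h1.
  have e2 : \dim (Pi :&: T) = 2 by apply/eqP; rewrite eqn_leq h2 h.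
  have e : (Pi :&: T = Pi)%VS by apply: sub_eqdim; [exact: capvSl | rewrite e2 dPi].
  have aT : a1 \in T by move: aPi; rewrite -e memv_cap => /andP[].
  have bT : b \in T by move: bPi; rewrite -e memv_cap => /andP[].
  have eT : T = A := spread_uniq hS sT sA a0 aT aA.
  by move: bA; rewrite -eT bT.
have cR : #|R S Pi 0| * (q - 1) = q ^ 2 - 1.
  by rewrite (countR hS (sub0v Pi) H) dPi dimv0.
have cR' : #|R S Pi 0| = q + 1.
  apply/eqP; rewrite -(eqn_pmul2r (q1pos F)) cR sq1 //; exact: ltnW (q_gt1 F).
have AR : (A : VS) \in R S Pi 0.
  rewrite inE; apply/andP; split; first exact/pbP.
  by apply/existsP; exists a1; rewrite aPi aA memv0 a0.
have dTP : forall T : VS, T \in R S Pi 0 -> \dim ((T : {vspace V}) + Pi) = 4.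
  move=> T; rewrite inE => /andP[/pbP sT /existsP[w /andP[/andP[wP w0] wT]]].
  have := dimv_sum_cap T Pi; rewrite (SV_dim sT) dPi capvC (H _ _ sT wP w0 wT).
  by rewrite addn1 => -[].
set bad := [pred c : V | [exists T : VS, (T \in R S Pi 0) && (c \in ((T : {vspace V}) + Pi)%VS)]].
set D2 := [pred t : VS * V | (t.1 \in R S Pi 0) && (t.2 \in ((t.1 : {vspace V}) + Pi)%VS)].
have cD2 : #|D2| = #|R S Pi 0| * q ^ 4.
  rewrite /D2 (@card_dpair _ _ (R S Pi 0) (fun T : VS => [pred c : V | c \in ((T : {vspace V}) + Pi)%VS]) (q ^ 4)) //.
  by move=> T TR; rewrite -(dTP T TR) -card_vspace.
have cbad : #|bad| <= #|D2|.
  apply: leq_trans (leq_imset_card (fun t : VS * V => t.2) D2).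
  apply/subset_leq_card/subsetP => c; rewrite inE => /existsP[T /andP[TR cT]].
  by apply/imsetP; exists (T, c); rewrite // inE /= TR.
have [c cbad0] : exists c, c \notin bad.
  apply/existsP; rewrite -negb_forall; apply/negP => /forallP all_bad.
  have : #|(fullv : {vspace V})| <= #|bad|.
    by apply/subset_leq_card/subsetP => c _; apply: all_bad.
  rewrite card_vspace dimfull; move/leq_trans/(_ (leq_trans cbad (eq_leq cD2))).
  rewrite cR'; apply/negP; rewrite -ltnNge.
  exact: big_ineq (q_gt1 F) n6.
have cnot : forall T : VS, T \in R S Pi 0 -> c \notin ((T : {vspace V}) + Pi)%VS.
  move=> T TR; apply: contra cbad0 => cT; rewrite inE; apply/existsP; exists T.
  by rewrite TR cT.
have cPi : c \notin Pi by apply: contra (cnot _ AR); apply: (subvP (addvSr _ _)).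
set X := (Pi + <[c]>)%VS.
have dX : \dim X = 3 by rewrite dim_addl // dPi.
have PiX : (Pi <= X)%VS by exact: addvSl.
have cX : c \in X by apply: (subvP (addvSr _ _)); exact: memv_line.
exists X; split=> //.
  move=> sX.
  have XR : (X : VS) \in R S Pi 0.
    rewrite inE; apply/andP; split; first exact/pbP.
    by apply/existsP; exists a1; rewrite aPi memv0 a0 (subvP PiX).
  by apply: (negP (cnot _ XR)); apply: (subvP (addvSl _ _)).
case=> T [sT dTX].
have h := meetW dX (capvSr T X) PiX dTX dPi.
have [v] := dimpos_vec h; rewrite !memv_cap => /andP[/andP[vT _] vP] v0.
have TR : (T : VS) \in R S Pi 0.
  rewrite inE; apply/andP; split; first exact/pbP.
  by apply/existsP; exists v; rewrite vP vT memv0 v0.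
have v0' : v \notin (0%VS : {vspace V}) by rewrite memv0.
have dPT := H T v sT vP v0' vT.
set Y := (T :&: X + Pi)%VS.
have YX : (Y <= X)%VS by rewrite subv_add capvSr PiX.
have dY : 3 <= \dim Y.
  have := dimv_sum_cap (T :&: X) Pi; rewrite dTX dPi.
  have : \dim (T :&: X :&: Pi) <= 1.
    apply: leq_trans (_ : _ <= \dim (Pi :&: T)) _; last by rewrite dPT.
    apply: dimvS; rewrite subv_cap capvSr /=.
    exact: subv_trans (capvSl _ _) (capvSl _ _).
  rewrite -/Y; move: (\dim Y) (\dim (T :&: X :&: Pi)%VS) => a2 b2; clear; lia.
have eY : Y = X by apply: sub_eqdim => //; rewrite dX.
have : c \in ((T : {vspace V}) + Pi)%VS.
  apply: (subvP (addvS (capvSl T X) (subvv Pi))); by rewrite -/Y eY.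
by apply/negP; apply: cnot.
Qed.

End Exist2.


Lemma cnt_3 (F : finFieldType) n (S : grass_vertex F n 3 -> Prop) X : cnt S X 3 = 0.
Proof.
apply: eq_card0 => W; rewrite !inE; apply/and3P => -[_ _ /eqP e].
by have := dist_le2 S W; rewrite e.
Qed.

Lemma num_eq (V : eqType) (P : V -> Prop) k k' : num_exactly P k -> k = k' -> num_exactly P k'.
Proof. by move=> h <-. Qed.

Theorem corollary2p2 (F : finFieldType) (n : nat) (S : grass_vertex F n 3 -> Prop) :
  (6 <= n)%N -> (3 %| n)%N -> is_spread3 S ->
  completely_regular (@grass_adj F n 3) S /\ covering_radius (@grass_adj F n 3) S 2.
Proof.
move=> n6 _ hS.
set K := cK F n.
set a1 := cGm2 F + cA F n + cR1 F * cG F.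
set g2 := cR2 F * cG F.
split.
  exists (fun i => if i == 1 then 1 else if i == 2 then g2 else 0),
         (fun i => if i == 0 then 0 else if i == 1 then a1 else if i == 2 then K - g2 else 0),
         (fun i => if i == 0 then K else if i == 1 then K - 1 - a1 else 0).
  move=> i x /(layer_iff hS) Hx.
  have dX : \dim (sval x) = 3 by apply/eqP; exact: (svalP x).
  have hsum := cnt_sum S (sval x); rewrite (NbK dX) in hsum.
  have Hle := dist_le2 S (sval x).
  rewrite /distv in Hx; subst i.
  case De: (dist S (sval x)) Hle => [|[|[|]]] // _ /=.
  - have sX : SV S (sval x) by apply/pbP; rewrite -(dist0 S) De.
    have c0 := cnt0_0 hS sX; have c2 := cnt0_2 sX.
    split=> //.
      exact: num_eq (num_cnt hS x 0) c0.
    by apply: num_eq (num_cnt hS x 1) _; rewrite /K /a1 /g2 hsum c0 c2 addn0.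
  - have eX : E S (sval x) by apply/pbP; rewrite -(dist1 hS) De.
    have nS : ~ SV S (sval x) by move=> h; move: De; rewrite /dist; case: pbP.
    have c0 := cnt1_0 hS dX eX; have c1 := cnt1_1 hS dX nS eX.
    split; first move=> _.
    + exact: num_eq (num_cnt hS x 0) c0.
    + by apply: num_eq (num_cnt hS x 1) _; rewrite c1 /a1 /g2.
    + by apply: num_eq (num_cnt hS x 2) _; rewrite /K /a1 /g2 hsum c0 c1 -addnA addKn addKn.
  - move/eqP: De; rewrite (dist2 S) => /andP[/pbP nS /pbP nE].
    have c0 := cnt2_0 nE; have c1 := cnt2_1 hS dX nS nE.
    split; first move=> _.
    + by apply: num_eq (num_cnt hS x 1) _; rewrite c1 /a1 /g2.
    + by apply: num_eq (num_cnt hS x 2) _; rewrite /K /a1 /g2 hsum c0 c1 add0n addKn.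
    + exact: num_eq (num_cnt hS x 3) (cnt_3 S (sval x)).
split.
  have [X [dX nS nE]] := exists_far hS n6.
  pose x : grass_vertex F n 3 := exist _ X (introT eqP dX).
  exists x; apply/(layer_iff hS); rewrite /distv /=.
  by apply/eqP; rewrite (dist2 S); apply/andP; split; apply/negP => /pbP.
move=> i x lt /(layer_iff hS) e.
by have := dist_le2 S (sval x); rewrite -/(distv S x) e leqNgt lt.
Qed.
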